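(* Let $n$ and $0<n_1<\cdots<n_d<n$ be integers with $m_1=n_1$, $m_k=n_k-n_{k-1}$ ($2\le k\le d$), $m_{d+1}=n-n_d$, and equip $\mathrm{Flag}(n_1,\dots,n_d;n)=\{(VJ_1V^{\mathsf T},\dots,VJ_{d+1}V^{\mathsf T}):V\in\mathrm{O}(n)\}\subseteq(\mathbb{R}^{n\times n})^{d+1}$ with the metric induced by the Frobenius inner product. Let $V_0\in\mathrm{O}(n)$ and $A,B\in\mathfrak{so}(n)$ with $A(k,k)=B(k,k)=0$ for $k=1,\dots,d+1$. Let $V(t)=V_0\exp(tA)$, so that $c(t)=V(t)(J_1,\dots,J_{d+1})V(t)^{\mathsf T}$ is the geodesic through $V_0(J_1,\dots,J_{d+1})V_0^{\mathsf T}$ with initial direction $V_0(AJ_1-J_1A,\dots,AJ_{d+1}-J_{d+1}A)V_0^{\mathsf T}$. Then the parallel transport along $c$ of $Y(0)=V_0(BJ_1-J_1B,\dots,BJ_{d+1}-J_{d+1}B)V_0^{\mathsf T}$ is \[ Y(t)=V(t)\big(X(t)J_1-J_1X(t),\dots,X(t)J_{d+1}-J_{d+1}X(t)\big)V(t)^{\mathsf T}, \] where $X(t)$ solves $\dot X(t)=\tfrac12\,\pi([X(t),A])$, $X(0)=B$.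
   Context: $J_k=\operatorname{diag}(-I_{m_1},\dots,-I_{m_{k-1}},I_{m_k},-I_{m_{k+1}},\dots,-I_{m_{d+1}})$ for $k=1,\dots,d+1$. $V(M_1,\dots,M_{d+1})V^{\mathsf T}$ denotes $(VM_1V^{\mathsf T},\dots,VM_{d+1}V^{\mathsf T})$. For an $n\times n$ matrix $M$, $M(p,q)$ denotes its $(p,q)$ block in the partition $n=m_1+\cdots+m_{d+1}$; for $M\in\mathfrak{so}(n)$, $\pi(M)$ is obtained by setting all diagonal blocks to zero; $[X,A]=XA-AX$. Parallel transport is with respect to the Levi-Civita connection of the induced metric, i.e. $Y$ is parallel iff the orthogonal projection of $\dot Y(t)$ onto $\mathbb{T}_{c(t)}\mathrm{Flag}$ vanishes. *)

(* Defs.v *)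
From HB Require Import structures.
From mathcomp Require Import all_boot all_order all_algebra.
From mathcomp Require Import all_classical all_reals all_analysis.
Set Implicit Arguments. Unset Strict Implicit. Unset Printing Implicit Defensive.
Import Order.TTheory GRing.Theory Num.Theory.
Import numFieldNormedType.Exports.
Local Open Scope ring_scope.

Section FlagDefs.
Variable R : realType.

(* block index (in 'I_(d+1), 0-based) of the row/column i : 'I_n for the
   partition n = m_1 + ... + m_{d+1} determined by ns = (n_1,...,n_d):
   blk i = #{ k | n_k <= i } (i is 0-based). *)
Definition blk (d n : nat) (ns : 'I_d -> nat) (i : 'I_n) : 'I_d.+1 :=
  inord #|[set k : 'I_d | (ns k <= i)%N]|.

Definition Jmat (d n : nat) (ns : 'I_d -> nat) (k : 'I_d.+1) : 'M[R]_n :=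
  \matrix_(i, j) (if i == j then (if blk ns i == k then 1 else -1) else 0).

Definition ambient (d n : nat) := 'I_d.+1 -> 'M[R]_n.

Definition orthogonal_mx (n : nat) (V : 'M[R]_n) : Prop := V *m V^T = 1%:M.

Definition skew_mx (n : nat) (A : 'M[R]_n) : Prop := A^T = - A.

Definition diag_blocks_zero (d n : nat) (ns : 'I_d -> nat) (A : 'M[R]_n) : Prop :=
  forall i j : 'I_n, blk ns i = blk ns j -> A i j = 0.

Definition piblk (d n : nat) (ns : 'I_d -> nat) (M : 'M[R]_n) : 'M[R]_n :=
  \matrix_(i, j) (if blk ns i == blk ns j then 0 else M i j).

Definition flag_pt (d n : nat) (ns : 'I_d -> nat) (V : 'M[R]_n) : ambient d n :=
  fun k => V *m @Jmat d n ns k *m V^T.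

Definition in_flag (d n : nat) (ns : 'I_d -> nat) (P : ambient d n) : Prop :=
  exists V : 'M[R]_n, orthogonal_mx V /\ P = flag_pt ns V.

Definition expm (n : nat) (M : 'M[R]_n) : 'M[R]_n :=
  \matrix_(i, j) limn (fun N : nat => ((\sum_(k < N) (k`!%:R)^-1 *: M ^+ k) i j : R)).

Definition mx_deriv (n : nat) (F : R -> 'M[R]_n) (t : R) (D : 'M[R]_n) : Prop :=
  forall i j : 'I_n, derivable (fun s => F s i j) t 1 /\
                     derive1 (fun s => F s i j) t = D i j.

Definition amb_deriv (d n : nat) (G : R -> ambient d n) (t : R) (D : ambient d n) : Prop :=
  forall k : 'I_d.+1, mx_deriv (fun s => G s k) t (D k).

Definition tangent (d n : nat) (ns : 'I_d -> nat) (P W : ambient d n) : Prop :=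
  exists G : R -> ambient d n,
    (forall s, in_flag ns (G s)) /\ G 0 = P /\ amb_deriv G 0 W.

Definition frob (d n : nat) (P Q : ambient d n) : R :=
  \sum_(k < d.+1) \sum_(i < n) \sum_(j < n) P k i j * Q k i j.

(* Y is a vector field along c which is parallel for the Levi-Civita connection
   of the induced metric: Y(t) is tangent at c(t), Y is differentiable, and the
   orthogonal projection of Y'(t) onto T_{c(t)}Flag vanishes, i.e. Y'(t) is
   Frobenius-orthogonal to T_{c(t)}Flag. *)
Definition parallel_along (d n : nat) (ns : 'I_d -> nat)
    (c Y : R -> ambient d n) : Prop :=
  forall t : R, tangent ns (c t) (Y t) /\
    exists Yd : ambient d n, amb_deriv Y t Yd /\
      forall W, tangent ns (c t) W -> frob Yd W = 0.

End FlagDefs.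

Arguments blk {d n} ns i.
Arguments Jmat {R d n} ns k.
Arguments piblk {R d n} ns M.
Arguments flag_pt {R d n} ns V.
Arguments in_flag {R d n} ns P.
Arguments expm {R n} M.
Arguments tangent {R d n} ns P W.
Arguments parallel_along {R d n} ns c Y.

(* Main.v *)
Require Import Defs.
From HB Require Import structures.
From mathcomp Require Import all_boot all_order all_algebra.
From mathcomp Require Import all_classical all_reals all_analysis.
From mathcomp Require Import ring lra.
Import Order.TTheory GRing.Theory Num.Theory.
Import numFieldNormedType.Exports.
Local Open Scope ring_scope.
Set Implicit Arguments. Unset Strict Implicit. Unset Printing Implicit Defensive.

Section Calc.
Variable R : realType.

Definition mxd (n : nat) (F : R -> 'M[R]_n) (t : R) (D : 'M[R]_n) : Prop :=
  forall i j, is_derive t (1:R) (fun s => F s i j) (D i j).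

Lemma mxd_deriv n (F : R -> 'M[R]_n) t D : mxd F t D -> mx_deriv F t D.
Proof.
move=> h i j; split; first by have := h i j; case.
rewrite derive1E; exact: derive_val.
Qed.

Lemma deriv_mxd n (F : R -> 'M[R]_n) t D : mx_deriv F t D -> mxd F t D.
Proof.
move=> h i j; have [d e] := h i j; rewrite -e derive1E; exact: derivableP.
Qed.

Lemma mxd_ext n (F : R -> 'M[R]_n) t D D' : mxd F t D -> D = D' -> mxd F t D'.
Proof. by move=> h <-. Qed.

Lemma mxd_fext n (F G : R -> 'M[R]_n) t D : mxd F t D -> (forall s, F s = G s) -> mxd G t D.
Proof. by move=> h e; have -> : G = F by apply/funext=> s; rewrite e. Qed.

Lemma mxd_cst n (M : 'M[R]_n) t : mxd (fun _ => M) t 0.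
Proof. move=> i j; rewrite mxE; exact: is_derive_cst. Qed.

Lemma mxd_add n (F G : R -> 'M[R]_n) t F' G' :
  mxd F t F' -> mxd G t G' -> mxd (fun s => F s + G s) t (F' + G').
Proof.
move=> hF hG i j; rewrite mxE.
have -> : (fun s => (F s + G s) i j) = (fun s => F s i j) + (fun s => G s i j).
  by apply/funext => s; rewrite mxE.
exact: is_deriveD.
Qed.

Lemma mxd_opp n (F : R -> 'M[R]_n) t F' :
  mxd F t F' -> mxd (fun s => - F s) t (- F').
Proof.
move=> hF i j; rewrite mxE.
have -> : (fun s => (- F s) i j) = - (fun s => F s i j).
  by apply/funext => s; rewrite !mxE.
exact: is_deriveN.
Qed.

Lemma mxd_sub n (F G : R -> 'M[R]_n) t F' G' :
  mxd F t F' -> mxd G t G' -> mxd (fun s => F s - G s) t (F' - G').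
Proof. by move=> hF hG; apply: mxd_add => //; apply: mxd_opp. Qed.

Lemma mxd_tr n (F : R -> 'M[R]_n) t F' :
  mxd F t F' -> mxd (fun s => (F s)^T) t F'^T.
Proof.
move=> hF i j; rewrite mxE.
have -> : (fun s => (F s)^T i j) = (fun s => F s j i) by apply/funext => s; rewrite mxE.
exact: hF.
Qed.

Lemma mxd_scale n (F : R -> 'M[R]_n) t F' (a : R) :
  mxd F t F' -> mxd (fun s => a *: F s) t (a *: F').
Proof.
move=> hF i j; rewrite mxE.
have -> : (fun s => (a *: F s) i j) = a *: (fun s => F s i j).
  by apply/funext => s; rewrite !mxE.
exact: is_deriveZ.
Qed.

Lemma mxd_mul n (F G : R -> 'M[R]_n) t F' G' :
  mxd F t F' -> mxd G t G' -> mxd (fun s => F s *m G s) t (F' *m G t + F t *m G').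
Proof.
move=> hF hG i j.
have -> : (fun s => (F s *m G s) i j) =
    \sum_(l < n) ((fun s => F s i l) * (fun s => G s l j)).
  by rewrite fct_sumE; apply/funext => s; rewrite mxE.
apply: is_derive_eq; first by apply: is_derive_sum => l; apply: is_deriveM.
rewrite !mxE -big_split /=; apply: eq_bigr => l _.
by rewrite /GRing.scale /= addrC mulrC [G t l j * _]mulrC.
Qed.

End Calc.
Section Expm.
Variable R : realType.

Definition gc n (M : 'M[R]_n) (a b : 'I_n) (j k : nat) : R :=
  (k`!%:R)^-1 * (M ^+ (k + j)) a b.

Lemma gc_diffs n (M : 'M[R]_n) a b j :
  pseries_diffs (gc M a b j) = gc M a b j.+1.
Proof.
apply/funext => k; rewrite /pseries_diffs /gc factS natrM invfM mulrA mulVKf //.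
by rewrite addSnnS.
Qed.

Definition mnorm n (M : 'M[R]_n) : R := \sum_i \sum_j `|M i j|.

Lemma mnorm_ge0 n (M : 'M[R]_n) : 0 <= mnorm M.
Proof. by apply: sumr_ge0 => i _; apply: sumr_ge0. Qed.

Lemma pow_bound n (M : 'M[R]_n) k a b : `|(M ^+ k) a b| <= mnorm M ^+ k.
Proof.
elim: k a b => [|k IH] a b.
  rewrite expr0 -idmxE mxE; case: (a == b) => /=; by rewrite ?normr1 ?normr0.
rewrite exprSr -mulmxE mxE (le_trans (ler_norm_sum _ _ _)) //.
apply: (@le_trans _ _ (\sum_l mnorm M ^+ k * `|M l b|)).
  apply: ler_sum => l _; rewrite normrM ler_wpM2r //.
rewrite -mulr_sumr exprSr ler_wpM2l ?exprn_ge0 ?mnorm_ge0 //.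
apply: ler_sum => l _; rewrite (bigD1 b) //= lerDl; by apply: sumr_ge0 => *.
Qed.

Lemma cvg_gc n (M : 'M[R]_n) a b j K : cvgn (pseries (gc M a b j) K).
Proof.
apply: normed_cvg.
apply: (@series_le_cvg _ _ (fun k => mnorm M ^+ j * ((mnorm M * `|K|) ^+ k / k`!%:R))).
- by move=> k /=.
- move=> k; apply: mulr_ge0; first by rewrite exprn_ge0 ?mnorm_ge0.
  by apply: divr_ge0; rewrite ?exprn_ge0 ?mulr_ge0 ?mnorm_ge0.
- move=> k; rewrite /= /gc !normrM normfV normr_nat normrX.
  rewrite [X in _ <= X](_ : _ = k`!%:R^-1 * mnorm M ^+ (k + j) * `|K| ^+ k);
    last by rewrite exprMn exprD; ring.
  rewrite ler_wpM2r ?exprn_ge0 // ler_wpM2l ?invr_ge0 //.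
  exact: pow_bound.
- have -> : (fun k => mnorm M ^+ j * ((mnorm M * `|K|) ^+ k / k`!%:R)) =
     mnorm M ^+ j *: exp_coeff (mnorm M * `|K|) by apply/funext => k.
  exact: is_cvg_seriesZ (is_cvg_series_exp_coeff _).
Qed.

Lemma isd_gc n (M : 'M[R]_n) a b t :
  is_derive t (1:R) (fun s => limn (pseries (gc M a b 0) s)) (limn (pseries (gc M a b 1) t)).
Proof.
rewrite -gc_diffs; apply: (@pseries_snd_diffs _ _ (`|t| + 1)).
- exact: cvg_gc.
- rewrite gc_diffs; exact: cvg_gc.
- rewrite !gc_diffs; exact: cvg_gc.
- by rewrite [ltRHS]ger0_norm ?addr_ge0 // ltrDl.
Qed.

Lemma exprZmx n (M : 'M[R]_n) (c : R) k : (c *: M) ^+ k = c ^+ k *: M ^+ k.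
Proof.
elim: k => [|k IH]; first by rewrite !expr0 scale1r.
by rewrite !exprS IH -!mulmxE -scalemxAl -scalemxAr scalerA.
Qed.

Lemma expm_entry n (M : 'M[R]_n) s a b :
  expm (s *: M) a b = limn (pseries (gc M a b 0) s).
Proof.
rewrite mxE (_ : (fun N : nat => _) = pseries (gc M a b 0) s) //; apply/funext => N.
rewrite summxE /pseries /series /= big_mkord; apply: eq_bigr => k _.
by rewrite mxE exprZmx mxE /gc addn0; ring.
Qed.

Lemma lim_sum_mul n (f : 'I_n -> nat -> R) (c : 'I_n -> R) :
  (forall l, cvgn (f l)) ->
  limn (fun N => \sum_l f l N * c l) = \sum_l limn (f l) * c l.
Proof.
move=> hf; apply: cvg_lim => //.
apply: (@cvg_big R^o 'I_n +%R 0 xpredT add_continuous nat eventually _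
   (fun l N => f l N * c l) (fun l => limn (f l) * c l)) => // l _.
apply: cvgMr_tmp; exact: hf.
Qed.

Lemma pseries_gc1 n (M : 'M[R]_n) a b t :
  pseries (gc M a b 1) t = fun N => \sum_l pseries (gc M a l 0) t N * M l b.
Proof.
apply/funext => N; rewrite /pseries /series /=.
under [RHS]eq_bigr do rewrite big_distrl /=.
rewrite exchange_big /=; apply: eq_bigr => k _.
rewrite /gc addn0 addn1 exprSr -mulmxE mxE big_distrr big_distrl /=.
apply: eq_bigr => l _; ring.
Qed.

Lemma expm_isd n (M : 'M[R]_n) t :
  forall a b, is_derive t (1:R) (fun s => expm (s *: M) a b) ((expm (t *: M) *m M) a b).
Proof.
move=> a b.
have -> : (fun s => expm (s *: M) a b) = (fun s => limn (pseries (gc M a b 0) s)).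
  by apply/funext => s; rewrite expm_entry.
apply: is_derive_eq; first exact: isd_gc.
rewrite pseries_gc1 lim_sum_mul; last by move=> l; exact: cvg_gc.
rewrite mxE; apply: eq_bigr => l _; by rewrite expm_entry.
Qed.

Lemma expm0 n (M : 'M[R]_n) : expm (0 *: M) = 1.
Proof.
apply/matrixP => a b; rewrite expm_entry.
apply: (@lim_near_cst R^o) => //; near=> N.
rewrite /pseries /series /=.
have N1 : (0 < N)%N by near: N; exists 1%N.
rewrite -(prednK N1) big_nat_recl //= big1 ?addr0.
  by rewrite /gc expr0 mulr1 fact0 invr1 mul1r.
by move=> k _; rewrite expr0n /= mulr0.
Unshelve. all: by end_near.
Qed.

End Expm.


Section Orth.
Variable R : realType.

Lemma mxd_mull n (C : 'M[R]_n) (F : R -> 'M[R]_n) t F' :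
  mxd F t F' -> mxd (fun s => C *m F s) t (C *m F').
Proof.
move=> h; apply: mxd_ext; first exact: (mxd_mul (mxd_cst C t) h).
by rewrite mul0mx add0r.
Qed.

Lemma mxd_mulr n (C : 'M[R]_n) (F : R -> 'M[R]_n) t F' :
  mxd F t F' -> mxd (fun s => F s *m C) t (F' *m C).
Proof.
move=> h; apply: mxd_ext; first exact: (mxd_mul h (mxd_cst C t)).
by rewrite mulmx0 addr0.
Qed.

Lemma mxd_uniq n (F : R -> 'M[R]_n) t D1 D2 : mxd F t D1 -> mxd F t D2 -> D1 = D2.
Proof.
move=> h1 h2; apply/matrixP => i j.
by rewrite -(@derive_val _ _ _ _ _ _ _ (h1 i j)) -(@derive_val _ _ _ _ _ _ _ (h2 i j)).
Qed.

Lemma expm_mxd n (M : 'M[R]_n) t :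
  mxd (fun s => expm (s *: M)) t (expm (t *: M) *m M).
Proof. move=> i j; exact: expm_isd. Qed.

Lemma mxd_const_entry n (F : R -> 'M[R]_n) :
  (forall t, mxd F t 0) -> forall s, F s = F 0.
Proof.
move=> h s; apply/matrixP => i j.
apply: (@is_derive_0_is_cst _ (fun s => F s i j)) => x.
by have := h x i j; rewrite mxE.
Qed.

Lemma expm_orth n (M : 'M[R]_n) (hM : M^T = - M) s :
  expm (s *: M) *m (expm (s *: M))^T = 1%:M.
Proof.
have := @mxd_const_entry n (fun s => expm (s *: M) *m (expm (s *: M))^T).
move=> -> //=; first by rewrite expm0 trmx1 mulmx1 idmxE.
move=> t; apply: mxd_ext; first exact: (mxd_mul (expm_mxd M t) (mxd_tr (expm_mxd M t))).
by rewrite trmx_mul hM mulNmx mulmxN !mulmxA addrN.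
Qed.

Lemma orth_mul n (U W : 'M[R]_n) :
  orthogonal_mx U -> orthogonal_mx W -> orthogonal_mx (U *m W).
Proof.
rewrite /orthogonal_mx => hU hW.
by rewrite trmx_mul mulmxA -(mulmxA U) hW mulmx1 hU.
Qed.

Lemma orthC n (U : 'M[R]_n) : orthogonal_mx U -> U^T *m U = 1%:M.
Proof. by move=> h; apply: mulmx1C. Qed.

End Orth.


Section Blk.
Variable R : realType.

Definition sg d n (ns : 'I_d -> nat) (k : 'I_d.+1) (i : 'I_n) : R :=
  if blk ns i == k then 1 else -1.

Lemma Jmat_diag d n (ns : 'I_d -> nat) k :
  Jmat ns k = diag_mx (\row_i sg ns k i) :> 'M[R]_n.
Proof.
apply/matrixP => i j; rewrite !mxE /sg.
by case: eqP => [->|_]; rewrite ?mulr1n ?mulr0n.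
Qed.

Lemma mulJ d n (ns : 'I_d -> nat) k (M : 'M[R]_n) i j :
  (M *m Jmat ns k) i j = M i j * sg ns k j.
Proof. by rewrite Jmat_diag mul_mx_diag !mxE. Qed.

Lemma Jmul d n (ns : 'I_d -> nat) k (M : 'M[R]_n) i j :
  (Jmat ns k *m M) i j = sg ns k i * M i j.
Proof. by rewrite Jmat_diag mul_diag_mx !mxE mulrC. Qed.

Lemma sg2 d n (ns : 'I_d -> nat) k (i : 'I_n) : sg ns k i * sg ns k i = 1 :> R.
Proof. by rewrite /sg; case: ifP => _; rewrite ?mulr1 ?mulrNN ?mulr1. Qed.

Lemma JJ d n (ns : 'I_d -> nat) k : Jmat ns k *m Jmat ns k = 1%:M :> 'M[R]_n.
Proof.
apply/matrixP => i j; rewrite mulJ !mxE /sg.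
case: eqP => [->|_]; last by rewrite mul0r.
by case: ifP => _; rewrite ?mulr1 ?mulrNN ?mulr1.
Qed.

Lemma Jcomm d n (ns : 'I_d -> nat) k l :
  Jmat ns k *m Jmat ns l = Jmat ns l *m Jmat ns k :> 'M[R]_n.
Proof.
apply/matrixP => i j; rewrite !mulJ !mxE.
case: eqP => [->|_]; last by rewrite !mul0r.
by rewrite mulrC.
Qed.

Lemma Jtr d n (ns : 'I_d -> nat) k : (Jmat ns k)^T = Jmat ns k :> 'M[R]_n.
Proof. by rewrite Jmat_diag tr_diag_mx. Qed.

Lemma frob_tr n (P Q : 'M[R]_n) : \sum_i \sum_j P i j * Q i j = \tr (P^T *m Q).
Proof.
rewrite /mxtrace exchange_big /=; apply: eq_bigr => j _.
by rewrite mxE; apply: eq_bigr => i _; rewrite mxE.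
Qed.

Lemma mul_self_ge0 (x : R) : 0 <= x * x.
Proof. by rewrite -expr2 sqr_ge0. Qed.

Lemma X_blk d n (ns : 'I_d -> nat) (A B : 'M[R]_n) (X : R -> 'M[R]_n)
  (hBblk : diag_blocks_zero ns B)
  (hXode : forall t : R, mx_deriv X t (2^-1 *: piblk ns (X t *m A - A *m X t)))
  (hX0 : X 0 = B) : forall t, diag_blocks_zero ns (X t).
Proof.
move=> t i j e.
rewrite -(hBblk i j e) -hX0.
apply: (@is_derive_0_is_cst _ (fun s => X s i j)) => x.
have := deriv_mxd (hXode x) i j.
by rewrite !mxE e eqxx mulr0.
Qed.

Lemma X_skew d n (ns : 'I_d -> nat) (A B : 'M[R]_n) (X : R -> 'M[R]_n)
  (hA : A^T = - A) (hB : B^T = - B)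
  (hBblk : diag_blocks_zero ns B)
  (hXode : forall t : R, mx_deriv X t (2^-1 *: piblk ns (X t *m A - A *m X t)))
  (hX0 : X 0 = B) : forall t, (X t)^T = - X t.
Proof.
have Xb := X_blk hBblk hXode hX0.
pose X' x := 2^-1 *: piblk ns (X x *m A - A *m X x).
pose Z s := X s + (X s)^T.
have hZ x : mxd Z x (X' x + (X' x)^T).
  by apply: mxd_add; [exact: deriv_mxd | apply: mxd_tr; exact: deriv_mxd].
have key x : \sum_i \sum_j Z x i j * (X' x + (X' x)^T) i j = 0.
  pose W := X x *m A - A *m X x.
  have -> : \sum_i \sum_j Z x i j * (X' x + (X' x)^T) i j =
            2^-1 * \sum_i \sum_j Z x i j * (W + W^T) i j.
    rewrite mulr_sumr; apply: eq_bigr => i _; rewrite mulr_sumr; apply: eq_bigr => j _.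
    rewrite /Z /X' /piblk !mxE.
    case: (eqVneq (blk ns i) (blk ns j)) => e.
      by rewrite (Xb x i j e) (Xb x j i (esym e)); ring.
    by ring.
  have eW : W + W^T = Z x *m A - A *m Z x.
    rewrite /W /Z !linearB /= !trmx_mul hA mulNmx mulmxN opprK.
    rewrite mulmxDl mulmxDr.
    set a := X x *m A; set b := A *m X x; set c := (X x)^T *m A; set e := A *m (X x)^T.
    apply/matrixP => i j; rewrite !mxE; ring.
  rewrite eW frob_tr.
  have -> : (Z x)^T = Z x by rewrite /Z linearD /= trmxK addrC.
  rewrite mulmxBr linearB /= mulmxA.
  by rewrite [\tr (Z x *m Z x *m A)]mxtrace_mulC [\tr (Z x *m (A *m Z x))]mxtrace_mulC mulmxA subrr mulr0.
pose g s := \sum_i \sum_j Z s i j * Z s i j.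
have hg x : is_derive x (1:R) g 0.
  have -> : g = \sum_i \sum_j ((fun s => Z s i j) * (fun s => Z s i j)).
    rewrite fct_sumE; apply/funext => s; rewrite /g; apply: eq_bigr => i _.
    by rewrite fct_sumE.
  apply: is_derive_eq.
    apply: is_derive_sum => i; apply: is_derive_sum => j; apply: is_deriveM; exact: hZ.
  transitivity (2 * \sum_i \sum_j Z x i j * (X' x + (X' x)^T) i j);
    last by rewrite key mulr0.
  rewrite mulr_sumr; apply: eq_bigr => i _ /=.
  rewrite mulr_sumr; apply: eq_bigr => j _.
  rewrite /GRing.scale /=; ring.
have g0 t : g t = 0.
  rewrite (@is_derive_0_is_cst _ g t 0 hg) /g.
  apply: big1 => i _; apply: big1 => j _.
  by rewrite /Z hX0 hB subrr mxE mul0r.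
move=> t.
have h1 i : \sum_j Z t i j * Z t i j = 0.
  apply: (psumr_eq0P _ (g0 t)) => // i1 _; apply: sumr_ge0 => j1 _; exact: mul_self_ge0.
have Zt i j : Z t i j = 0.
  have := @psumr_eq0P _ _ xpredT _ (fun j1 _ => mul_self_ge0 (Z t i j1)) (h1 i) j isT.
  by move/eqP; rewrite mulf_eq0 orbb => /eqP.
apply/matrixP => i j; have := Zt i j; rewrite /Z !mxE => h.
by apply/eqP; rewrite -addr_eq0 addrC h.
Qed.

End Blk.

Arguments sg {R d n} ns k i.



Section Core.
Variable R : realType.

Lemma mxBE n (M N : 'M[R]_n) i j : (M - N) i j = M i j - N i j.
Proof. by rewrite !mxE. Qed.
Lemma mxDE n (M N : 'M[R]_n) i j : (M + N) i j = M i j + N i j.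
Proof. by rewrite !mxE. Qed.

Definition Dk d n (ns : 'I_d -> nat) (X : 'M[R]_n) k := X *m Jmat ns k - Jmat ns k *m X.
Definition Xp d n (ns : 'I_d -> nat) (A X : 'M[R]_n) := 2^-1 *: piblk ns (X *m A - A *m X).
Definition Tk d n (ns : 'I_d -> nat) (A X : 'M[R]_n) k :=
  A *m Dk ns X k - Dk ns X k *m A + Dk ns (Xp ns A X) k.

Lemma DkE d n (ns : 'I_d -> nat) (X : 'M[R]_n) k a b :
  Dk ns X k a b = X a b * sg ns k b - sg ns k a * X a b.
Proof. by rewrite /Dk mxBE mulJ Jmul. Qed.

Lemma core_id d n (ns : 'I_d -> nat) (A X : 'M[R]_n)
  (hAb : diag_blocks_zero ns A) (hXb : diag_blocks_zero ns X) i j :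
  blk ns i != blk ns j ->
  Tk ns A X (blk ns j) i j = Tk ns A X (blk ns i) i j.
Proof.
move=> hij.
set p := blk ns i; set q := blk ns j.
have sqj : sg ns q j = 1 :> R by rewrite /sg eqxx.
have spi : sg ns p i = 1 :> R by rewrite /sg eqxx.
have sqi : sg ns q i = -1 :> R by rewrite /sg (negPf hij).
have spj : sg ns p j = -1 :> R by rewrite /sg eq_sym (negPf hij).
have TE k : Tk ns A X k i j = \sum_l A i l * Dk ns X k l j - \sum_l Dk ns X k i l * A l j
     + (Xp ns A X i j * sg ns k j - sg ns k i * Xp ns A X i j).
  by rewrite /Tk mxDE mxBE DkE [(A *m _) i j]mxE [(_ *m A) i j]mxE.
have S3 : Xp ns A X i j = 2^-1 * ((X *m A) i j - (A *m X) i j).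
  by rewrite /Xp mxE /piblk mxE -/p -/q (negPf hij) mxBE.
have S1 : \sum_l A i l * Dk ns X q l j - \sum_l A i l * Dk ns X p l j = 2 * (A *m X) i j.
  rewrite -sumrB mxE mulr_sumr; apply: eq_bigr => l _; rewrite -mulrBr !DkE sqj spj.
  rewrite /sg -/p -/q.
  case: (eqVneq (blk ns l) p) => e1.
    by rewrite (hAb i l (esym e1)) !mul0r mulr0.
  case: (eqVneq (blk ns l) q) => e2.
    by rewrite (hXb l j e2) !(mul0r, mulr0, subrr).
  ring.
have S2 : \sum_l Dk ns X q i l * A l j - \sum_l Dk ns X p i l * A l j = 2 * (X *m A) i j.
  rewrite -sumrB mxE mulr_sumr; apply: eq_bigr => l _; rewrite -mulrBl !DkE sqi spi.
  rewrite /sg -/p -/q.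
  case: (eqVneq (blk ns l) p) => e1.
    by rewrite (hXb i l (esym e1)) !(mul0r, mulr0, subrr).
  case: (eqVneq (blk ns l) q) => e2.
    by rewrite (hAb l j e2) !(mul0r, mulr0, subrr).
  ring.
apply/eqP; rewrite -subr_eq0; apply/eqP.
rewrite !TE sqj spi sqi spj S3; move: S1 S2; lra.
Qed.

Lemma entry_sum d n (ns : 'I_d -> nat) (i j : 'I_n) (w tau : 'I_d.+1 -> R)
  (h1 : forall k, w k * sg ns k j + sg ns k i * w k = 0)
  (h2 : forall k l, w k * sg ns l j + sg ns k i * w l = w l * sg ns k j + sg ns l i * w k)
  (ht : blk ns i != blk ns j -> tau (blk ns j) = tau (blk ns i)) :
  \sum_k tau k * w k = 0.
Proof.
case: (eqVneq (blk ns i) (blk ns j)) => e.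
  apply: big1 => k _; suff -> : w k = 0 by rewrite mulr0.
  have := h1 k; rewrite /sg e; case: ifP => _; lra.
have wk k : k != blk ns i -> k != blk ns j -> w k = 0.
  move=> k1 k2; have := h1 k; rewrite /sg.
  have -> : (blk ns i == k) = false by rewrite eq_sym (negPf k1).
  have -> : (blk ns j == k) = false by rewrite eq_sym (negPf k2).
  lra.
rewrite (bigD1 (blk ns i)) //= (bigD1 (blk ns j)) /=; last by rewrite eq_sym.
rewrite big1; last first.
  by move=> k /andP[k1 k2]; rewrite wk ?mulr0.
have := h2 (blk ns i) (blk ns j); rewrite /sg eqxx eqxx (negPf e) eq_sym (negPf e).
rewrite (ht e) => h; have -> : w (blk ns i) = - w (blk ns j) by lra.
ring.
Qed.

End Core.


Section Main.
Variable R : realType.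

Lemma tangent_of d n (ns : 'I_d -> nat) (U Om : 'M[R]_n) :
  orthogonal_mx U -> Om^T = - Om ->
  tangent ns (flag_pt ns U) (fun k => U *m (Om *m Jmat ns k - Jmat ns k *m Om) *m U^T).
Proof.
move=> hU hO.
exists (fun s => flag_pt ns (U *m expm (s *: Om))); split; [|split].
- move=> s; exists (U *m expm (s *: Om)); split=> //.
  exact: orth_mul hU (expm_orth hO s).
- by rewrite expm0 -idmxE mulmx1.
- move=> k; apply: mxd_deriv; rewrite /flag_pt.
  have hF : mxd (fun s => U *m expm (s *: Om)) 0 (U *m Om).
    apply: mxd_ext; first exact: (mxd_mull U (expm_mxd Om 0)).
    by rewrite expm0 -idmxE mul1mx.
  apply: mxd_ext; first exact: (mxd_mul (mxd_mulr (Jmat ns k) hF) (mxd_tr hF)).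
  rewrite /= expm0 -idmxE mulmx1 trmx_mul hO mulNmx mulmxN mulmxBr mulmxBl !mulmxA.
  by rewrite addrC.
Qed.

Lemma conjL n (V M N : 'M[R]_n) : V^T *m V = 1%:M ->
  V^T *m (M *m (V *m N *m V^T)) *m V = (V^T *m M *m V) *m N.
Proof. by move=> h; rewrite !mulmxA -(mulmxA _ V^T V) h mulmx1. Qed.

Lemma conjR n (V M N : 'M[R]_n) : V^T *m V = 1%:M ->
  V^T *m ((V *m N *m V^T) *m M) *m V = N *m (V^T *m M *m V).
Proof. by move=> h; rewrite !mulmxA h mul1mx. Qed.

Lemma conjD n (V M N : 'M[R]_n) :
  V^T *m (M + N) *m V = V^T *m M *m V + V^T *m N *m V.
Proof. by rewrite mulmxDr mulmxDl. Qed.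

Lemma flagJJ d n (ns : 'I_d -> nat) (U : 'M[R]_n) k l : orthogonal_mx U ->
  flag_pt ns U k *m flag_pt ns U l = U *m (Jmat ns k *m Jmat ns l) *m U^T.
Proof.
move=> hU; have hU' := orthC hU.
by rewrite /flag_pt !mulmxA -(mulmxA _ U^T U) hU' mulmx1.
Qed.

Lemma tangent_cons d n (ns : 'I_d -> nat) (V : 'M[R]_n) (W : ambient R d n) :
  orthogonal_mx V -> tangent ns (flag_pt ns V) W ->
  let W' := fun k => V^T *m W k *m V in
  (forall k, W' k *m Jmat ns k + Jmat ns k *m W' k = 0) /\
  (forall k l, W' k *m Jmat ns l + Jmat ns k *m W' l = W' l *m Jmat ns k + Jmat ns l *m W' k).
Proof.
move=> hV [G [hG [G0 dG]]] W'.
have hV' := orthC hV.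
have PP s k : G s k *m G s k = 1%:M.
  have [U [hU ->]] := hG s; rewrite flagJJ // JJ mulmx1; exact: hU.
have PC s k l : G s k *m G s l = G s l *m G s k.
  by have [U [hU ->]] := hG s; rewrite !flagJJ // Jcomm.
have dG' k : mxd (fun s => G s k) 0 (W k) by apply: deriv_mxd; exact: dG.
split.
- move=> k.
  have e1 := mxd_mul (dG' k) (dG' k).
  have e2 : mxd (fun s => G s k *m G s k) 0 0.
    by apply: (mxd_fext (mxd_cst 1%:M 0)) => s; rewrite PP.
  have := mxd_uniq e1 e2; rewrite G0 => e.
  have := congr1 (fun M => V^T *m M *m V) e.
  by rewrite /= conjD conjL // conjR // mulmx0 mul0mx.
- move=> k l.
  have e1 := mxd_mul (dG' k) (dG' l).
  have e2 : mxd (fun s => G s k *m G s l) 0 (W l *m G 0 k + G 0 l *m W k).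
    by apply: (mxd_fext (mxd_mul (dG' l) (dG' k))) => s; rewrite PC.
  have := mxd_uniq e1 e2; rewrite G0 => e.
  have := congr1 (fun M => V^T *m M *m V) e.
  by rewrite /= !conjD !conjL // !conjR.
Qed.

Lemma frob_conj d n (V : 'M[R]_n) (T W : ambient R d n) :
  frob (fun k => V *m T k *m V^T) W = frob T (fun k => V^T *m W k *m V).
Proof.
rewrite /frob; apply: eq_bigr => k _; rewrite !frob_tr.
rewrite !trmx_mul trmxK -!mulmxA mxtrace_mulC !mulmxA.
done.
Qed.

End Main.


Lemma alg (R : realType) n (Vt A D D' : 'M[R]_n) : A^T = - A ->
  (Vt *m A *m D + Vt *m D') *m Vt^T + Vt *m D *m (Vt *m A)^T =
  Vt *m (A *m D - D *m A + D') *m Vt^T.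
Proof.
move=> hA; rewrite trmx_mul hA mulNmx mulmxN !(mulmxDl, mulmxDr, mulmxBr, mulmxBl) !mulmxA.
by rewrite mulmxN mulNmx !mulmxA addrAC.
Qed.

Unset Implicit Arguments. Set Strict Implicit.

Theorem corollaryB3 (R : realType) (n d : nat) (ns : 'I_d -> nat)
  (hns_pos : forall k : 'I_d, (0 < ns k < n)%N)
  (hns_inc : forall k l : 'I_d, (k < l)%N -> (ns k < ns l)%N)
  (V0 A B : 'M[R]_n) (X : R -> 'M[R]_n)
  (hV0 : orthogonal_mx V0)
  (hA : skew_mx A) (hB : skew_mx B)
  (hAblk : diag_blocks_zero ns A) (hBblk : diag_blocks_zero ns B)
  (hXode : forall t : R,
      mx_deriv X t (2^-1 *: piblk ns (X t *m A - A *m X t)))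
  (hX0 : X 0 = B) :
  let V := fun t : R => V0 *m expm (t *: A) in
  let c := fun t : R => flag_pt ns (V t) in
  let Y := fun (t : R) (k : 'I_d.+1) =>
      V t *m (X t *m Jmat ns k - Jmat ns k *m X t) *m (V t)^T in
  parallel_along ns c Y /\
  Y 0 = (fun k => V0 *m (B *m Jmat ns k - Jmat ns k *m B) *m V0^T).
Proof.
move=> V c Y.
have hVo t : orthogonal_mx (V t) by apply: orth_mul hV0 (expm_orth hA t).
have Xb := X_blk hBblk hXode hX0.
have Xs := X_skew hA hB hBblk hXode hX0.
split; last first.
  by apply/funext => k; rewrite /Y /V expm0 -idmxE mulmx1 hX0.
move=> t; split; first exact: tangent_of (hVo t) (Xs t).
exists (fun k => V t *m Tk ns A (X t) k *m (V t)^T); split.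
- move=> k; apply: mxd_deriv.
  have hVd : mxd V t (V t *m A).
    by apply: mxd_ext; [exact: (mxd_mull V0 (expm_mxd A t)) | rewrite mulmxA].
  have hXd : mxd X t (Xp ns A (X t)) by exact: deriv_mxd (hXode t).
  have hD : mxd (fun s => X s *m Jmat ns k - Jmat ns k *m X s) t (Dk ns (Xp ns A (X t)) k).
    exact: mxd_sub (mxd_mulr _ hXd) (mxd_mull _ hXd).
  apply: mxd_ext; first exact: (mxd_mul (mxd_mul hVd hD) (mxd_tr hVd)).
  rewrite /= -[X t *m Jmat ns k - Jmat ns k *m X t]/(Dk ns (X t) k).
  rewrite /Tk; exact: alg.
- move=> W hW.
  have [h1 h2] := tangent_cons (hVo t) hW.
  rewrite (frob_conj (V t) (fun k => Tk ns A (X t) k)) /frob.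
  rewrite exchange_big; apply: big1 => i _; rewrite exchange_big; apply: big1 => j _.
  apply: (entry_sum (ns:=ns) (i:=i) (j:=j)).
  + move=> k; have := congr1 (fun M : 'M[R]_n => M i j) (h1 k).
    by rewrite /= mxDE mulJ Jmul => ->; rewrite mxE.
  + move=> k l; have := congr1 (fun M : 'M[R]_n => M i j) (h2 k l).
    by rewrite /= !mxDE !mulJ !Jmul.
  + move=> hij; exact: (@core_id R d n ns A (X t) hAblk (Xb t) i j hij).
Qed.
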